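(* Let $G$ be a torsion-free group, $\mathbb{F}$ a field, $\mathsf{a}$ a unit in $\mathbb{F}[G]$ with $supp(\mathsf{a})=\{1,x,y,xy\}$ where $x,y$ are distinct non-trivial elements of $G$, and let $\mathsf{b}$ be a mate of $\mathsf{a}$. Then $|supp(\mathsf{a})supp(\mathsf{b})|\le 2|supp(\mathsf{b})|-1$.
   Context: $supp(\gamma)=\{x\in G:\gamma_x\ne0\}$; for subsets $B,C\subseteq G$, $BC=\{bc:b\in B,c\in C\}$. A mate of $\mathsf{a}$ is an element $\mathsf{b}$ with $\mathsf{a}\mathsf{b}=1$ such that $|supp(\mathsf{b})|\le|supp(\mathsf{b}')|$ for every $\mathsf{b}'$ with $\mathsf{a}\mathsf{b}'=1$. *)

(* Defs.v *)
From mathcomp Require Import all_boot all_algebra.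
Set Implicit Arguments. Unset Strict Implicit. Unset Printing Implicit Defensive.
Import GRing.Theory.
Local Open Scope ring_scope.

(* Elements of the group algebra F[G] are functions G -> F with finite
   support; the support is listed (without repetition) by a seq. *)
Section GroupAlgebra.
Variables (G : eqType) (mul : G -> G -> G) (one : G) (inv : G -> G).
Variable (F : fieldType).

Definition is_group : Prop :=
  [/\ associative mul, left_id one mul & left_inverse one inv mul].

Definition torsion_free : Prop :=
  forall (g : G) (n : nat), (0 < n)%N -> iter n (mul g) one = one -> g = one.

Definition supported_on (f : G -> F) (s : seq G) : Prop :=
  uniq s /\ forall g, (f g != 0) = (g \in s).

Definition fin_supp (f : G -> F) : Prop := exists s, supported_on f s.

Definition prod_is_one (f g : G -> F) : Prop :=
  exists sf, supported_on f sf /\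
    forall z, \sum_(h <- sf) f h * g (mul (inv h) z) = (if z == one then 1 else 0).

Definition is_unit_GA (f : G -> F) : Prop :=
  fin_supp f /\ exists f', [/\ fin_supp f', prod_is_one f f' & prod_is_one f' f].

Definition is_mate (a b : G -> F) (sb : seq G) : Prop :=
  [/\ supported_on b sb, prod_is_one a b &
      forall b' sb', supported_on b' sb' -> prod_is_one a b' ->
        (size sb <= size sb')%N].

End GroupAlgebra.

(* Main.v *)
Require Import Defs.
From mathcomp Require Import all_boot all_algebra.
From mathcomp Require Import zify ring.
Import GRing.Theory.
Local Open Scope ring_scope.

Section Grp.
Context {G : eqType} {mul : G -> G -> G} {one : G} {inv : G -> G}.
Hypothesis Hg : is_group mul one inv.

Let A : associative mul. Proof. by case: Hg. Qed.
Let L : left_id one mul. Proof. by case: Hg. Qed.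
Let V : left_inverse one inv mul. Proof. by case: Hg. Qed.

Lemma gmulV g : mul g (inv g) = one.
Proof.
have e : mul g (inv g) = mul (mul (inv (inv g)) (inv g)) (mul g (inv g)) by rewrite V L.
by rewrite e -A (A (inv g)) V L V.
Qed.
Lemma gmul1 g : mul g one = g.
Proof. by rewrite -(V g) A gmulV L. Qed.
Lemma gmulK g h : mul (inv g) (mul g h) = h.
Proof. by rewrite A V L. Qed.
Lemma gmulKV g h : mul g (mul (inv g) h) = h.
Proof. by rewrite A gmulV L. Qed.
Lemma gcancl {g h k} : mul g h = mul g k -> h = k.
Proof. by move=> e; rewrite -(gmulK g h) e gmulK. Qed.
Lemma gcancr {g h k} : mul h g = mul k g -> h = k.
Proof. by move=> e; rewrite -(gmul1 h) -(gmulV g) A e -A gmulV gmul1. Qed.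
Lemma ginvK g : inv (inv g) = g.
Proof. by apply: (@gcancl (inv g)); rewrite gmulV V. Qed.
Lemma ginv1 : inv one = one.
Proof. by rewrite -[LHS]gmul1 V. Qed.
Lemma ginvM g h : inv (mul g h) = mul (inv h) (inv g).
Proof. by apply: (@gcancl (mul g h)); rewrite gmulV A -(A g) gmulV gmul1 gmulV. Qed.
Lemma gA : associative mul. Proof. exact: A. Qed.
Lemma g1m : left_id one mul. Proof. exact: L. Qed.
Lemma ginv_eq1 g : (inv g == one) = (g == one).
Proof. apply/eqP/eqP=> e; last by rewrite e ginv1. by rewrite -(ginvK g) e ginv1. Qed.

Definition pw u k := iter k (mul u) one.
Lemma iter_pw u k g : iter k (mul u) g = mul (pw u k) g.
Proof. elim: k => [|k IH] /=; first by rewrite L. by rewrite IH A. Qed.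
Lemma pwD u i j : pw u (i + j) = mul (pw u i) (pw u j).
Proof. by rewrite /pw iterD -iter_pw. Qed.

Hypothesis Ht : torsion_free mul one.

Lemma pw_inj {u i j g} : u != one -> (i < j)%N -> iter i (mul u) g = iter j (mul u) g -> False.
Proof.
move=> u1 lij; rewrite !iter_pw => /gcancr e.
have : pw u (j - i) = one.
  apply: (@gcancr (pw u i)); rewrite -pwD subnK ?e ?g1m //; exact: ltnW.
move=> e'; have hp : (0 < j - i)%N by rewrite subn_gt0.
by move: (Ht _ _ hp e') => /eqP; rewrite (negbTE u1).
Qed.

Lemma iter_inj u g : u != one -> injective (fun j => iter j (mul u) g).
Proof.
move=> u1 i j /= e; case: (ltngtP i j) => // h; first by case: (pw_inj u1 h e).
by case: (pw_inj u1 h (esym e)).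
Qed.

Lemma inf_orbit u g (D : seq G) : u != one -> exists j, iter j (mul u) g \notin D.
Proof.
move=> u1; set Ls := [seq iter j (mul u) g | j <- iota 0 (size D).+1].
case: (boolP (all (mem D) Ls)) => [/allP hall | /allPn [z /mapP [j _ ->] hz]]; last by exists j.
have uL : uniq Ls by rewrite map_inj_uniq ?iota_uniq //; exact: iter_inj.
have := uniq_leq_size uL hall; by rewrite size_map size_iota ltnn.
Qed.
Lemma iter_cancel u k g : iter k (mul u) (iter k (mul (inv u)) g) = g.
Proof. elim: k => [|k IH] //; by rewrite iterSr [iter k.+1 _ g]/= gmulKV. Qed.

Lemma chain {u g} {D : seq G} : u != one -> g \in D -> exists k s,
  [/\ s \in D, mul (inv u) s \notin D, g = iter k (mul u) s & (k == 0)%N || (mul u s \in D)].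
Proof.
move=> u1 gD.
have iu1 : inv u != one by rewrite ginv_eq1.
have ex : exists j, iter j (mul (inv u)) g \notin D := inf_orbit (inv u) g D iu1.
case: (ex_minnP ex) => [[|k]]; first by rewrite /= gD.
move=> hj hmin; exists k, (iter k (mul (inv u)) g).
have sD : iter k (mul (inv u)) g \in D.
  apply/negPn/negP => /hmin; by rewrite ltnn.
split => //; first by rewrite iter_cancel.
case: k hj hmin sD => [|k] //= hj hmin sD; rewrite gmulKV.
apply/negPn/negP => /hmin; by rewrite ltnNge leqnSn.
Qed.
Lemma single_start u p y (D : seq G) : u != one -> y != one -> p \in D ->
  (forall s, s \in D -> mul (inv u) s \notin D -> s = p) ->
  mul y p \in D -> mul (inv y) p \in D -> False.
Proof.
move=> u1 y1 pD hS hy hiy.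
case: (chain u1 hy) => j [s [sD sS e _]]; rewrite (hS s sD sS) in e.
case: (chain u1 hiy) => i [s' [sD' sS' e' _]]; rewrite (hS s' sD' sS') in e'.
rewrite iter_pw in e; rewrite iter_pw in e'.
have ey : y = pw u j := gcancr e.
have : mul (pw u (j + i)) p = mul one p by rewrite g1m pwD -A -e' -ey gmulKV.
move/gcancr => h.
case: j e ey h => [|j] e ey h; first by move: y1; rewrite ey eqxx.
have hp : (0 < j.+1 + i)%N by [].
by move: (Ht _ _ hp h) => /eqP; rewrite (negbTE u1).
Qed.
Lemma iter_ne1 u k : u != one -> iter k (mul u) u != one.
Proof.
move=> u1; apply/eqP => h.
have h' : iter k.+1 (mul u) one = one by rewrite iterSr gmul1.
by move: (Ht _ _ (ltn0Sn k) h') => /eqP; rewrite (negbTE u1).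
Qed.

Lemma laurent (F : fieldType) (x : G) (al be : F) (f : G -> F) (D : seq G) :
  x != one -> al != 0 -> be != 0 -> (forall z, f z != 0 -> z \in D) ->
  (forall z, al * f z + be * f (mul (inv x) z) = if z == one then 1 else 0) -> False.
Proof.
move=> x1 al0 be0 hD E.
have fD0 z : z \notin D -> f z = 0.
  by move=> zD; apply/eqP/negPn/negP => /hD; rewrite (negbTE zD).
have ix1 : inv x != one by rewrite ginv_eq1.
have fx : f x = 0.
  case: (inf_orbit x x D x1) => j /fD0.
  elim: j => [|j IH] // h; apply: IH.
  have := E (iter j.+1 (mul x) x); rewrite (negbTE (iter_ne1 _ _ x1)) /= gmulK.
  rewrite /= in h; rewrite h mulr0 add0r => /eqP; rewrite mulf_eq0 (negbTE be0) /=.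
  by move/eqP.
have f1 : f one = 0.
  have := E x; rewrite (negbTE x1) V fx mulr0 add0r => /eqP.
  by rewrite mulf_eq0 (negbTE be0) /= => /eqP.
have fxi : f (inv x) = 0.
  case: (inf_orbit (inv x) (inv x) D ix1) => j /fD0.
  elim: j => [|j IH] // h; apply: IH.
  have := E (iter j (mul (inv x)) (inv x)); rewrite (negbTE (iter_ne1 _ _ ix1)).
  rewrite /= in h; rewrite h mulr0 addr0 => /eqP; rewrite mulf_eq0 (negbTE al0) /=.
  by move/eqP.
have := E one; rewrite eqxx gmul1 f1 fxi !mulr0 add0r => /eqP.
by rewrite eq_sym oner_eq0.
Qed.
End Grp.

Section SeqAux.
Context {T : eqType}.
Implicit Types (s : seq T) (P Q : pred T).

Lemma count_swap s1 s2 : uniq s1 -> uniq s2 -> count (mem s2) s1 = count (mem s1) s2.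
Proof.
move=> u1 u2; rewrite -!size_filter; apply: perm_size; apply: uniq_perm; rewrite ?filter_uniq //.
by move=> z; rewrite !mem_filter andbC.
Qed.

Lemma count_split P Q s : count P s = count (predI P Q) s + count (predI P (predC Q)) s.
Proof. elim: s => //= h s ->; case: (P h); case: (Q h) => /=; lia. Qed.

Lemma count_le1 {P s} {c : T} : uniq s -> (forall g, g \in s -> P g -> g = c) -> (count P s <= 1)%N.
Proof.
move=> us h; rewrite -size_filter.
have sub : {subset filter P s <= [:: c]}.
  by move=> g; rewrite mem_filter inE => /andP [pg gs]; rewrite (h g gs pg).
exact: (uniq_leq_size (filter_uniq _ us) sub).
Qed.

Lemma count_two {P s p q} : uniq s -> p \in s -> q \in s -> P p -> P q -> p != q -> (1 < count P s)%N.
Proof.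
move=> us ps qs Pp Pq pq; rewrite -size_filter.
have u2 : uniq [:: p; q] by rewrite /= inE pq.
have sub : {subset [:: p; q] <= filter P s}.
  by move=> g; rewrite !inE => /orP [] /eqP ->; rewrite mem_filter ?Pp ?Pq.
exact: (uniq_leq_size u2 sub).
Qed.

Lemma count0 {P s} : (forall g, g \in s -> ~~ P g) -> count P s = 0%N.
Proof. by move=> h; apply/eqP; rewrite -leqn0 leqNgt -has_count; apply/hasPn. Qed.

Lemma count_ex {P s} : (0 < count P s)%N -> exists2 g, g \in s & P g.
Proof. by rewrite -has_count => /hasP. Qed.

Lemma count_eq_all {P Q s} : count P s = count (predI P Q) s -> forall g, g \in s -> P g -> Q g.
Proof.
rewrite (count_split P Q) => h g gs pg; apply/negPn/negP => nq.
have : count (predI P (predC Q)) s = 0%N by lia.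
by move/eqP; rewrite -leqn0 leqNgt -has_count => /hasPn /(_ g gs); rewrite /= pg nq.
Qed.
End SeqAux.

Section Main.
Context {G : eqType} {mul : G -> G -> G} {one : G} {inv : G -> G} {F : fieldType}.
Variables (a b : G -> F) (x y : G) (sb sa : seq G).
Hypotheses (Hg : is_group mul one inv) (Ht : torsion_free mul one).
Hypotheses (x1 : x != one) (y1 : y != one) (xny : x != y).
Hypothesis Ha : forall g, (a g != 0) = (g \in [:: one; x; y; mul x y]).
Hypothesis Hb : supported_on b sb.
Hypothesis Hsa : supported_on a sa.
Hypothesis Hc : forall z, \sum_(h <- sa) a h * b (mul (inv h) z) = if z == one then 1 else 0.

Let A := [:: one; x; y; mul x y].
Let yB := map (mul y) sb.
Let D := sb ++ [seq g <- yB | g \notin sb].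
Let c z := \sum_(h <- sa) a h * b (mul (inv h) z).

Lemma memyB g : (g \in yB) = (mul (inv y) g \in sb).
Proof.
apply/mapP/idP => [[h hs ->]|h]; first by rewrite (gmulK Hg).
by exists (mul (inv y) g) => //; rewrite (gmulKV Hg).
Qed.
Lemma memD g : (g \in D) = (g \in sb) || (g \in yB).
Proof. by rewrite mem_cat mem_filter; case: (g \in sb). Qed.
Lemma bnz g : (b g != 0) = (g \in sb). Proof. by case: Hb. Qed.
Lemma saA g : (g \in sa) = (g \in A). Proof. by case: Hsa => _ h; rewrite -h Ha. Qed.

Lemma sum_reps z (L : seq G) : uniq L -> {subset L <= A} ->
  (forall g, g \in A -> mul (inv g) z \in sb -> g \in L) ->
  c z = \sum_(g <- L) a g * b (mul (inv g) z).
Proof.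
move=> uL LA hL; rewrite /c (bigID (fun h => h \in L)) /=.
rewrite [X in _ + X]big1_seq ?addr0; last first.
  move=> h /andP [hnL hsa]; apply/eqP; rewrite mulf_eq0; apply/orP; right.
  apply/negPn/negP; rewrite bnz => hs; move: (hL h); rewrite -saA hsa => /(_ erefl hs).
  by rewrite (negbTE hnL).
rewrite -big_filter; apply: perm_big; apply: uniq_perm => //.
  by apply: filter_uniq; case: Hsa.
by move=> h; rewrite mem_filter; case hL': (h \in L) => //=; rewrite saA LA.
Qed.

Lemma c_one_rep z g1 : g1 \in A -> mul (inv g1) z \in sb ->
  (forall g, g \in A -> mul (inv g) z \in sb -> g = g1) -> z = one.
Proof.
move=> g1A g1s hg.
have e : c z = a g1 * b (mul (inv g1) z).
  rewrite (@sum_reps z [:: g1]) ?big_seq1 //; first by move=> h; rewrite inE => /eqP ->.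
  by move=> g gA gs; rewrite inE (hg g gA gs).
 have := Hc z; rewrite -/(c z) e.
have : a g1 * b (mul (inv g1) z) != 0 by rewrite mulf_neq0 // ?Ha // bnz.
by case: (z == one) /eqP => [//|_ h1 h2]; rewrite h2 eqxx in h1.
Qed.
Lemma invxy z : mul (inv (mul x y)) z = mul (inv y) (mul (inv x) z).
Proof. by rewrite (ginvM Hg) (gA Hg). Qed.
Lemma inv1m z : mul (inv one) z = z.
Proof. by rewrite (ginv1 Hg) (g1m Hg). Qed.
Lemma AP h : h \in A -> [\/ h = one, h = x, h = y | h = mul x y].
Proof. by rewrite !inE => /or4P [] /eqP ->; [apply: Or41|apply: Or42|apply: Or43|apply: Or44]. Qed.

Lemma F1 g : g \in D -> mul (inv x) g \notin D -> ~~ ((g \in sb) && (g \in yB)) -> g = one.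
Proof.
move=> gD hS hd.
have nx : mul (inv x) g \notin sb by move: hS; rewrite memD negb_or => /andP [].
have nxy : mul (inv (mul x y)) g \notin sb.
  by rewrite invxy -memyB; move: hS; rewrite memD negb_or => /andP [].
move: gD; rewrite memD => /orP [gs|gy].
- have gy : g \notin yB by move: hd; rewrite gs.
  apply: (@c_one_rep g one); first by rewrite !inE eqxx.
    by rewrite inv1m.
  move=> h /AP [] -> // hs.
  + by rewrite hs in nx.
  + by rewrite memyB hs in gy.
  + by rewrite hs in nxy.
- have gs : g \notin sb by move: hd; rewrite gy andbT.
  apply: (@c_one_rep g y); first by rewrite !inE eqxx !orbT.
    by rewrite -memyB.
  move=> h /AP [] -> // hs.
  + by rewrite inv1m in hs; rewrite hs in gs.
  + by rewrite hs in nx.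
  + by rewrite hs in nxy.
Qed.

Lemma F2 g : g \in D -> mul x g \notin D -> ~~ ((g \in sb) && (g \in yB)) -> mul x g = one.
Proof.
move=> gD hE hd.
have n1 : mul (inv one) (mul x g) \notin sb by rewrite inv1m; move: hE; rewrite memD negb_or => /andP [].
have ny : mul (inv y) (mul x g) \notin sb by rewrite -memyB; move: hE; rewrite memD negb_or => /andP [].
have ex : mul (inv x) (mul x g) = g by rewrite (gmulK Hg).
have exy : mul (inv (mul x y)) (mul x g) = mul (inv y) g by rewrite invxy ex.
move: gD; rewrite memD => /orP [gs|gy].
- have gy : g \notin yB by move: hd; rewrite gs.
  apply: (@c_one_rep _ x); first by rewrite !inE eqxx !orbT.
    by rewrite ex.
  move=> h /AP [] -> // hs.
  + by rewrite hs in n1.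
  + by rewrite hs in ny.
  + by rewrite memyB -exy hs in gy.
- have gs : g \notin sb by move: hd; rewrite gy andbT.
  apply: (@c_one_rep _ (mul x y)); first by rewrite !inE eqxx !orbT.
    by rewrite exy -memyB.
  move=> h /AP [] -> // hs.
  + by rewrite hs in n1.
  + by rewrite ex in hs; rewrite hs in gs.
  + by rewrite hs in ny.
Qed.
Lemma b0 g : g \notin sb -> b g = 0.
Proof. by move=> h; apply/eqP; rewrite -[_ == 0]negbK bnz h. Qed.

Lemma F3 p : p \in D -> mul (inv x) p \notin D -> mul x p \notin D ->
  (p \in sb) && (p \in yB) -> p != one -> mul x p != one -> False.
Proof.
move=> pD hS hE /andP [ps py] p1 xp1.
have qs : mul (inv y) p \in sb by rewrite -memyB.
case: (eqVneq (mul x y) one) => [xy1|xy1].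
  have iy : inv y = x.
    by rewrite -[inv y](g1m Hg) -xy1 -(gA Hg) (gmulV Hg) (gmul1 Hg).
  by move: hE; rewrite -iy memD qs.
have xxy : x != mul x y.
  apply/eqP => h; have h' : mul x one = mul x y by rewrite (gmul1 Hg).
  by move: y1; rewrite -(gcancl Hg h') eqxx.
have yxy : y != mul x y.
  apply/eqP => h; have h' : mul one y = mul x y by rewrite (g1m Hg).
  by move: x1; rewrite -(gcancr Hg h') eqxx.
have uA : uniq A.
  by rewrite /A /= !inE !negb_or eq_sym x1 eq_sym y1 eq_sym xy1 xny xxy yxy.
set al := a one; set be := a x; set ga := a y; set de := a (mul x y).
have al0 : al != 0 by rewrite /al Ha !inE eqxx.
have be0 : be != 0 by rewrite /be Ha !inE eqxx !orbT.
have nx : mul (inv x) p \notin sb by move: hS; rewrite memD negb_or => /andP [].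
have nxy : mul (inv (mul x y)) p \notin sb.
  by rewrite invxy -memyB; move: hS; rewrite memD negb_or => /andP [].
have cp : c p = al * b p + ga * b (mul (inv y) p).
  have u1 : uniq [:: one; y] by rewrite /= inE eq_sym y1.
  have s1 : {subset [:: one; y] <= A}.
    by move=> h; rewrite !inE => /orP [] /eqP ->; rewrite eqxx ?orbT.
  have r1 : forall g, g \in A -> mul (inv g) p \in sb -> g \in [:: one; y].
    move=> h /AP [] -> // hs; first by rewrite !inE eqxx.
    + by rewrite hs in nx.
    + by rewrite !inE eqxx orbT.
    + by rewrite hs in nxy.
  by rewrite (@sum_reps p [:: one; y] u1 s1 r1) big_cons big_seq1 inv1m.
have ex : mul (inv x) (mul x p) = p by rewrite (gmulK Hg).
have cxp : c (mul x p) = be * b p + de * b (mul (inv y) p).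
  have u1 : uniq [:: x; mul x y] by rewrite /= inE xxy.
  have s1 : {subset [:: x; mul x y] <= A}.
    by move=> h; rewrite !inE => /orP [] /eqP ->; rewrite eqxx ?orbT.
  have r1 : forall g, g \in A -> mul (inv g) (mul x p) \in sb -> g \in [:: x; mul x y].
    move=> h /AP [] -> // hs.
    + by move: hE; rewrite memD -(inv1m (mul x p)) hs.
    + by rewrite !inE eqxx.
    + by move: hE; rewrite memD memyB hs orbT.
    + by rewrite !inE eqxx orbT.
  by rewrite (@sum_reps (mul x p) [:: x; mul x y] u1 s1 r1) big_cons big_seq1 invxy ex.
have e1 : al * b p = - (ga * b (mul (inv y) p)).
  by apply/eqP; rewrite -subr_eq0 opprK -cp /c Hc (negbTE p1).
have e2 : be * b p = - (de * b (mul (inv y) p)).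
  by apply/eqP; rewrite -subr_eq0 opprK -cxp /c Hc (negbTE xp1).
have hk : al * de = be * ga.
  have : (al * de - be * ga) * b p = 0.
    have -> : (al * de - be * ga) * b p = de * (al * b p) - ga * (be * b p) by ring.
    by rewrite e1 e2; ring.
  have bp0 : b p != 0 by rewrite bnz.
  by move/eqP; rewrite mulf_eq0 (negbTE bp0) orbF subr_eq0 => /eqP.
have hde : de = be * ga / al.
  apply: (mulfI al0); rewrite hk; field; exact: al0.
apply: (@laurent _ _ _ _ Hg Ht F x al be (fun z => b z + ga / al * b (mul (inv y) z)) D x1 al0 be0).
  move=> z; apply: contraR => zD.
  have zs : z \notin sb by move: zD; rewrite memD negb_or => /andP [].
  have zy : mul (inv y) z \notin sb by rewrite -memyB; move: zD; rewrite memD negb_or => /andP [].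
  by rewrite !b0 // mulr0 addr0.
move=> z; rewrite -(Hc z) -/(c z) (@sum_reps z A uA) //.
rewrite !big_cons big_nil addr0 inv1m invxy -/al -/be -/ga -/de hde.
field; exact: al0.
Qed.
Lemma memmap u (s : seq G) g : (g \in map (mul u) s) = (mul (inv u) g \in s).
Proof.
apply/mapP/idP => [[h hs ->]|h]; first by rewrite (gmulK Hg).
by exists (mul (inv u) g) => //; rewrite (gmulKV Hg).
Qed.
Lemma uniq_map_mul u (s : seq G) : uniq s -> uniq (map (mul u) s).
Proof. by move=> us; rewrite map_inj_uniq // => h k; apply: (gcancl Hg). Qed.
Lemma usb : uniq sb. Proof. by case: Hb. Qed.
Lemma uD : uniq D.
Proof.
rewrite cat_uniq usb filter_uniq ?(uniq_map_mul _ _ usb) // andbT.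
by apply/hasPn => g; rewrite mem_filter => /andP [].
Qed.

Definition inS g := mul (inv x) g \notin D.
Definition inE' g := mul x g \notin D.
Definition dbl g := (g \in sb) && (g \in yB).

Lemma cnt_SE : count inS D = count inE' D.
Proof.
have e1 : count inS D = count (predC (mem (map (mul x) D))) D.
  by apply: eq_count => g; rewrite /inS /= memmap.
have e2 : count inE' D = count (predC (mem D)) (map (mul x) D).
  by rewrite count_map.
have := count_predC (mem (map (mul x) D)) D.
have := count_predC (mem D) (map (mul x) D).
rewrite size_map e1 e2 (@count_swap _ _ _ uD (uniq_map_mul x _ uD)); lia.
Qed.

Lemma sizeD_dbl : (size D + count dbl D = 2 * size sb)%N.
Proof.
rewrite size_cat size_filter count_cat.
have -> : count dbl [seq g <- yB | g \notin sb] = 0%N.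
  by apply: count0 => g; rewrite mem_filter /dbl => /andP [/negbTE -> _].
have -> : count dbl sb = count (mem yB) sb.
  by apply: eq_in_count => g gs; rewrite /dbl gs.
rewrite (@count_swap _ _ _ usb (uniq_map_mul y _ usb)).
have := count_predC (mem sb) yB; rewrite size_map.
have -> : count (fun g => g \notin sb) yB = count (predC (mem sb)) yB by [].
rewrite -/yB; lia.
Qed.

Lemma AB_le : (size (undup [seq mul g h | g <- A, h <- sb]) <= size D + count inE' D)%N.
Proof.
have hx w : w \in D -> mul x w \in D ++ map (mul x) (filter inE' D).
  move=> wD; rewrite mem_cat; case: (boolP (mul x w \in D)) => //= nD.
  by apply: map_f; rewrite mem_filter wD andbT.
have sub : {subset undup [seq mul g h | g <- A, h <- sb] <= D ++ map (mul x) (filter inE' D)}.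
  move=> z; rewrite mem_undup => /allpairsP [[g h] [/= gA hs ->]].
  have hD : h \in D by rewrite memD hs.
  have yhD : mul y h \in D by rewrite memD map_f ?orbT.
  case/AP: gA => ->.
  - by rewrite mem_cat (g1m Hg) hD.
  - exact: hx.
  - by rewrite mem_cat yhD.
  - by rewrite -(gA Hg); exact: hx.
apply: leq_trans (uniq_leq_size (undup_uniq _) sub) _.
by rewrite size_cat size_map size_filter.
Qed.
Lemma sb_ne : exists h0, h0 \in sb.
Proof.
case E: sb => [|h0 s]; last by exists h0; rewrite inE eqxx.
have := Hc one; rewrite eqxx big1_seq => [|h _]; first by move/eqP; rewrite eq_sym oner_eq0.
by rewrite b0 ?mulr0 // E.
Qed.

Lemma key : (count inE' D < count dbl D)%N.
Proof.
rewrite ltnNge; apply/negP => hle.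
have cS := cnt_SE.
have hsS := count_split inS dbl D.
have hsE := count_split inE' dbl D.
have ix1 : inv x != one by rewrite (ginv_eq1 Hg).
have hn : (count (predI inS (predC dbl)) D + count (predI inE' (predC dbl)) D <= 1)%N.
  have h1 : (count (predI inS (predC dbl)) D <= 1)%N.
    by apply: (count_le1 (c:=one) uD) => g gD /andP [hs hd]; exact: F1 _ gD hs hd.
  have h2 : (count (predI inE' (predC dbl)) D <= 1)%N.
    apply: (count_le1 (c:=inv x) uD) => g gD /andP [he hd].
    by rewrite -[g](gmulK Hg x) (F2 _ gD he hd) (gmul1 Hg).
  case: (posnP (count (predI inS (predC dbl)) D)) => z1; first lia.
  case: (posnP (count (predI inE' (predC dbl)) D)) => z2; first lia.
  exfalso.
  case: (count_ex z1) => g1 g1D /andP [s1 d1]; case: (count_ex z2) => g2 g2D /andP [e2 d2].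
  have eg1 := F1 _ g1D s1 d1; have eg2 := F2 _ g2D e2 d2.
  have eg2' : g2 = inv x by rewrite -[g2](gmulK Hg x) eg2 (gmul1 Hg).
  by move: s1; rewrite /inS eg1 (gmul1 Hg) -eg2' g2D.
have hUI : (count (predI inS dbl) D + count (predI inE' dbl) D <=
            count dbl D + count (predI inS (predI inE' dbl)) D)%N.
  rewrite -count_predUI; apply: leq_add.
    by apply: sub_count => g /= /orP [] /andP [].
  by apply: eq_leq; apply: eq_count => g /=; case: (inS g); case: (inE' g); case: (dbl g).
case: (posnP (count (predI inS (predI inE' dbl)) D)) => cI.
- case: (posnP (count inE' D)) => e0.
    case: sb_ne => h0 h0s; have h0D : h0 \in D by rewrite memD h0s.
    case: (chain Hg Ht x1 h0D) => k [s [sD sS _ _]].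
    have : (0 < count inS D)%N by rewrite -has_count; apply/hasP; exists s.
    lia.
  have e1 : count inE' D = 1%N by lia.
  have dyD p : dbl p -> mul y p \in D /\ mul (inv y) p \in D.
    move=> /andP [ps py]; split; first by rewrite memD map_f ?orbT.
    by rewrite memD -memyB py.
  case: (posnP (count (predI inS dbl) D)) => cSd.
    have : (0 < count (predI inE' dbl) D)%N by lia.
    case/count_ex => p pD /andP [ep dp]; case: (dyD p dp) => yp iyp.
    apply: (@single_start _ _ _ _ Hg Ht (inv x) p y D ix1 y1 pD _ yp iyp).
    move=> s sD; rewrite (ginvK Hg) => sE'; apply/eqP; apply/negPn/negP => ne.
    have := count_two uD sD pD sE' ep ne; lia.
  case/count_ex: cSd => p pD /andP [sp dp]; case: (dyD p dp) => yp iyp.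
  apply: (@single_start _ _ _ _ Hg Ht x p y D x1 y1 pD _ yp iyp).
  move=> s sD sS'; apply/eqP; apply/negPn/negP => ne.
  have := count_two uD sD pD sS' sp ne; lia.
- case/count_ex: cI => p pD /andP [sp /andP [ep dp]].
  case: (boolP ((p == one) || (mul x p == one))) => hp; last first.
    move: hp; rewrite negb_or => /andP [p1 xp1]; exact: F3 pD sp ep dp p1 xp1.
  have hSn : count (predI inS (predC dbl)) D = 0%N.
    apply: count0 => g gD; apply/negP => /andP [gs gd].
    have eg := F1 _ gD gs gd.
    case/orP: hp => /eqP hp.
      by move: gd; rewrite /= eg -hp dp.
    by move: ep; rewrite /inE' hp -eg gD.
  have hEn : count (predI inE' (predC dbl)) D = 0%N.
    apply: count0 => g gD; apply/negP => /andP [ge gd].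
    have eg := F2 _ gD ge gd.
    case/orP: hp => /eqP hp.
      by move: sp; rewrite /inS hp -eg (gmulK Hg) gD.
    by move: gd; rewrite -eg in hp; rewrite /= -(gcancl Hg hp) dp.
  have cIS : (count (predI inS (predI inE' dbl)) D <= count inS D)%N.
    by apply: sub_count => g /= /andP [].
  have eqc : count inS D = count (predI inS (predI inE' dbl)) D by lia.
  have hall := count_eq_all eqc.
  have alldbl : forall g, g \in D -> dbl g.
    move=> g gD; case: (chain Hg Ht x1 gD) => k [s [sD sS eg hk]].
    have /andP [es ds] := hall s sD sS.
    case: k eg hk => [|k] eg hk; first by rewrite eg.
    by move: es; rewrite /inE' (hk : mul x s \in D).
  case: sb_ne => h0 h0s.
  have iy1 : inv y != one by rewrite (ginv_eq1 Hg).
  have allin : forall j, iter j (mul (inv y)) h0 \in sb.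
    elim => [|j IH] //=.
    have gD : iter j (mul (inv y)) h0 \in D by rewrite memD IH.
    by have /andP [_ hy] := alldbl _ gD; rewrite -memyB.
  case: (inf_orbit Hg Ht (inv y) h0 sb iy1) => j.
  by rewrite allin.
Qed.
Lemma main_bound : (size (undup [seq mul g h | g <- A, h <- sb]) <= (2 * size sb).-1)%N.
Proof. have := AB_le; have := key; have := sizeD_dbl; lia. Qed.
End Main.

Theorem mainTheorem16 (G : eqType) (mul : G -> G -> G) (one : G) (inv : G -> G)
    (F : fieldType) (a b : G -> F) (x y : G) (sb : seq G) :
  is_group mul one inv ->
  torsion_free mul one ->
  x != one -> y != one -> x != y ->
  is_unit_GA mul one inv a ->
  (forall g, (a g != 0) = (g \in [:: one; x; y; mul x y])) ->
  is_mate mul one inv a b sb ->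
  (size (undup [seq mul g h | g <- [:: one; x; y; mul x y], h <- sb])
     <= (2 * size sb).-1)%N.
Proof.
move=> Hg Ht x1 y1 xny _ Ha [Hb [sa [Hsa Hc]] _].
exact: (main_bound _ _ _ _ _ _ Hg Ht x1 y1 xny Ha Hb Hsa Hc).
Qed.
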